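(* Let $\kappa_{\mathrm{charge}(3)}$ denote the growth rate of the charge(3) model and $\kappa_{Q\text{-charge}}$ the growth rate of the $Q$-charge model on the square lattice, as defined in the context. Then $\kappa_{\mathrm{charge}(3)} = \kappa_{Q\text{-charge}}$.
   Context: Work on the finite square lattice $[1,N]^2\subset\mathbb{Z}^2$, whose $N^2$ vertices carry spins $\oplus=+1$ or $\ominus=-1$. A spin configuration satisfies the charge(3) constraint if for every horizontal or vertical segment of consecutive vertices, the sum of the spins along that segment lies between $-3$ and $+3$. Let $Z^{\mathrm{ch}}_N$ be the number of charge(3) configurations on $[1,N]^2$. The $Q$-charge model places states on the bonds of $[1,N]^2$, including boundary bonds (so every vertex has exactly four incident bonds: north, west, east, south). Each bond state is an integer in $\{0,1,2,3\}$. A labelling is valid if at every vertex with north bond state $a$, west bond state $b$, east bond state $c$ and south bond state $d$, one has $d-a=c-b=\pm 1$ (both differences equal to the same value $+1$ or $-1$). Let $Z^{Q}_N$ be the number of valid $Q$-charge labellings. (Intuitively, the state of a horizontal (resp. vertical) bond is the cumulative charge after reading the spin to its west (resp. north), so a charge(3) configuration maps to one or more $Q$-charge configurations.) The growth rate of a model is $\kappa=\lim_{N\to\infty} Z_N^{1/N^2}$, where $Z_N$ is its number of valid configurations on $[1,N]^2$ (these limits are taken to exist). *)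

(* Defs.v *)
From Stdlib Require Import Reals.
From Coquelicot Require Import Coquelicot.
From mathcomp Require Import all_boot all_algebra.

Set Implicit Arguments.
Unset Strict Implicit.
Unset Printing Implicit Defensive.

Import GRing.Theory.
Local Open Scope ring_scope.

(* A spin configuration on [1,N]^2 : vertex (i,j) (row i, column j, 0-based)
   carries spin +1 (true) or -1 (false). *)
Definition spin (b : bool) : int := if b then 1 else -1.

Definition charge3 (N : nat) (s : {ffun 'I_N * 'I_N -> bool}) : bool :=
  [forall i : 'I_N, forall a : 'I_N, forall b : 'I_N,
     (leq a b) ==>
     [&& (-3 <= \sum_(j : 'I_N | (leq a j && leq j b)) spin (s (i, j)) <= 3)
       & (-3 <= \sum_(j : 'I_N | (leq a j && leq j b)) spin (s (j, i)) <= 3)]].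

Definition Zch (N : nat) : nat := #|[set s : {ffun 'I_N * 'I_N -> bool} | charge3 s]|.

(* Horizontal bonds: row i (< N), position k (<= N); bond k is the west bond of
   vertex (i,k) and the east bond of vertex (i,k-1); positions 0 and N are the
   boundary bonds.  Vertical bonds: position k (<= N), column j (< N); bond k is
   the north bond of vertex (k,j) and the south bond of vertex (k-1,j). *)
Definition Qconf (N : nat) : finType :=
  ({ffun 'I_N * 'I_N.+1 -> 'I_4} * {ffun 'I_N.+1 * 'I_N -> 'I_4})%type.

Definition st (x : 'I_4) : int := (nat_of_ord x)%:Z.

Definition Qvalid (N : nat) (c : Qconf N) : bool :=
  [forall i : 'I_N, forall j : 'I_N,
    let a := st (c.2 (widen_ord (leqnSn N) i, j)) in   (* north *)
    let b := st (c.1 (i, widen_ord (leqnSn N) j)) in   (* west  *)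
    let e := st (c.1 (i, lift ord0 j)) in              (* east  *)
    let d := st (c.2 (lift ord0 i, j)) in              (* south *)
    (d - a == e - b) && ((d - a == 1) || (d - a == -1))].

Definition ZQ (N : nat) : nat := #|[set c : Qconf N | Qvalid c]|.

Definition rootN2 (Z : nat -> nat) (N : nat) : R :=
  Rpower (INR (Z N)) (/ INR (N * N)%N).

(* Main.v *)
Require Import Defs.
From Stdlib Require Import Reals Lra.
From Coquelicot Require Import Coquelicot.
From mathcomp Require Import all_boot all_order all_algebra.
From mathcomp Require Import zify.
Set Implicit Arguments. Unset Strict Implicit. Unset Printing Implicit Defensive.
Import Order.TTheory GRing.Theory Num.Theory.
Local Open Scope ring_scope.

Lemma exmin (T : finType) (x0 : T) (F : T -> int) : exists x, forall y, F x <= F y.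
Proof.
case: (@arg_minP _ int T x0 xpredT F isT) => x _ H; exists x => y; exact: H.
Qed.

Section PS.
Variable N : nat.
Definition PS (g : 'I_N -> int) (k : nat) := \sum_(j : 'I_N | (j < k)%N) g j.
Definition seg (g : 'I_N -> int) (a b : nat) := \sum_(j : 'I_N | (a <= j)%N && (j <= b)%N) g j.

Lemma PS_diff g k1 k2 : (k1 <= k2)%N ->
  PS g k2 - PS g k1 = \sum_(j : 'I_N | (k1 <= j)%N && (j < k2)%N) g j.
Proof.
move=> le; rewrite /PS (bigID (fun j : 'I_N => (j < k1)%N)) /=.
have -> : \sum_(i < N | (i < k2)%N && (i < k1)%N) g i = \sum_(i < N | (i < k1)%N) g i.
  by apply: eq_bigl => i; apply/idP/idP => [/andP[]//|h]; rewrite h andbT; exact: leq_trans h le.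
rewrite addrC addrK; apply: eq_bigl => i; rewrite -leqNgt andbC //.
Qed.

Lemma PS_seg g k1 k2 : (k1 < k2)%N -> PS g k2 - PS g k1 = seg g k1 k2.-1.
Proof.
move=> lt; rewrite PS_diff; last exact: ltnW.
apply: eq_bigl => i.
by case: k2 lt => // k2 _; rewrite ltnS.
Qed.

Lemma PS0 g : PS g 0 = 0.
Proof. by rewrite /PS big_pred0 // => i. Qed.

Lemma PS_S g k (lt : (k < N)%N) : PS g k.+1 = PS g k + g (Ordinal lt).
Proof.
have := PS_diff g (leqnSn k); rewrite (_ : \sum_(j < N | _) _ = g (Ordinal lt)).
  by move=> <-; rewrite addrC subrK.
rewrite (big_pred1 (Ordinal lt)) // => i /=; apply/andP/eqP => [[]|->].
  by move=> h1 h2; apply: val_inj => /=; apply/eqP; rewrite eqn_leq h1 -ltnS h2.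
by [].
Qed.

Lemma PS_bound g : (forall a b : 'I_N, (a <= b)%N -> -3 <= seg g a b <= 3) ->
  forall k k', (k <= N)%N -> (k' <= N)%N -> PS g k - PS g k' <= 3.
Proof.
move=> H k k' hk hk'.
have [lt|ge] := ltnP k' k.
  rewrite PS_seg //.
  have hb : (k.-1 < N)%N by case: k lt hk {H} => // k; rewrite ltnS /=.
  have ha : (k' < N)%N by apply: leq_trans lt hk.
  have hab : (Ordinal ha <= Ordinal hb)%N by rewrite /=; case: k lt {hb hk} .
  by have /andP[_ ->] := H _ _ hab.
have [lt2|eq] := ltnP k k'.
  rewrite -opprB PS_seg //.
  have hb : (k'.-1 < N)%N by case: k' lt2 hk' {H ge} => // k'; rewrite ltnS /=.
  have ha : (k < N)%N by apply: leq_trans lt2 hk'.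
  have hab : (Ordinal ha <= Ordinal hb)%N by rewrite /=; case: k' lt2 {hb hk' ge}.
  have /andP[h _] := H _ _ hab.
  by rewrite lerNl.
have -> : k = k' by apply/eqP; rewrite eqn_leq ge eq.
by rewrite subrr.
Qed.
End PS.

Section Comb.
Variable N : nat.

Definition gr (s : {ffun 'I_N * 'I_N -> bool}) (i : 'I_N) := fun j : 'I_N => spin (s (i, j)).
Definition gc (s : {ffun 'I_N * 'I_N -> bool}) (j : 'I_N) := fun i : 'I_N => spin (s (i, j)).

Lemma charge3P s : charge3 s ->
  (forall i (a b : 'I_N), (a <= b)%N -> -3 <= seg (gr s i) a b <= 3) /\
  (forall j (a b : 'I_N), (a <= b)%N -> -3 <= seg (gc s j) a b <= 3).
Proof.
move=> /forallP H; split=> i a b ab.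
  by have /forallP/(_ a)/forallP/(_ b)/implyP/(_ ab)/andP[] := H i.
by have /forallP/(_ a)/forallP/(_ b)/implyP/(_ ab)/andP[] := H i.
Qed.

Definition sigma (c : Qconf N) : {ffun 'I_N * 'I_N -> bool} :=
  [ffun p => st (c.1 (p.1, lift ord0 p.2)) - st (c.1 (p.1, widen_ord (leqnSn N) p.2)) == 1].

Lemma st_ge0 x : 0 <= st x. Proof. by []. Qed.
Lemma st_le3 x : st x <= 3. Proof. by rewrite /st lez_nat -ltnS. Qed.
Lemma st_inj : injective st.
Proof. by move=> x y /eqP; rewrite /st eqz_nat => /eqP /val_inj. Qed.

Lemma validP c : Qvalid c -> forall i j,
  spin (sigma c (i, j)) = st (c.1 (i, lift ord0 j)) - st (c.1 (i, widen_ord (leqnSn N) j)) /\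
  spin (sigma c (i, j)) = st (c.2 (lift ord0 i, j)) - st (c.2 (widen_ord (leqnSn N) i, j)).
Proof.
move=> /forallP H i j; have /forallP/(_ j)/andP[/eqP e /orP o] := H i.
rewrite ffunE /= -e /spin.
by case: o => /eqP ->.
Qed.

Lemma widen_inord (j : 'I_N) : widen_ord (leqnSn N) j = inord j.
Proof. by apply: val_inj; rewrite /= inordK // ltnS ltnW. Qed.
Lemma lift_inord (j : 'I_N) : lift ord0 j = inord j.+1 :> 'I_N.+1.
Proof. by apply: val_inj; rewrite /= inordK // /bump /= ltnS. Qed.

Lemma rowH c : Qvalid c -> forall i k, (k <= N)%N ->
  st (c.1 (i, inord k)) = st (c.1 (i, inord 0)) + PS (gr (sigma c) i) k.
Proof.
move=> V i; elim=> [|k IH] hk; first by rewrite PS0 addr0.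
rewrite (PS_S _ hk) addrA -IH; last exact: ltnW.
have [e _] := validP V i (Ordinal hk).
rewrite /gr e widen_inord lift_inord /=.
by rewrite addrC subrK.
Qed.

Lemma colV c : Qvalid c -> forall j k, (k <= N)%N ->
  st (c.2 (inord k, j)) = st (c.2 (inord 0, j)) + PS (gc (sigma c) j) k.
Proof.
move=> V j; elim=> [|k IH] hk; first by rewrite PS0 addr0.
rewrite (PS_S _ hk) addrA -IH; last exact: ltnW.
have [_ e] := validP V (Ordinal hk) j.
rewrite /gc e widen_inord lift_inord /=.
by rewrite addrC subrK.
Qed.

Lemma diff_bd (x y : 'I_4) : -3 <= st x - st y <= 3.
Proof.
have := st_ge0 x; have := st_ge0 y; have := st_le3 x; have := st_le3 y.
move: (st x) (st y) => u v; lia.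
Qed.

Lemma sigma_charge3 c : Qvalid c -> charge3 (sigma c).
Proof.
move=> V; apply/forallP => i; apply/forallP => a; apply/forallP => b; apply/implyP => ab.
have hb : (b.+1 <= N)%N := ltn_ord b.
have ha : (a <= N)%N := ltnW (ltn_ord a).
have lt : (a < b.+1)%N by rewrite ltnS.
apply/andP; split.
  change (-3 <= seg (gr (sigma c) i) a b <= 3).
  have := PS_seg (gr (sigma c) i) lt; rewrite /= => <-.
  have -> : PS (gr (sigma c) i) b.+1 - PS (gr (sigma c) i) a = st (c.1 (i, inord b.+1)) - st (c.1 (i, inord a)).
    by rewrite (rowH V i hb) (rowH V i ha) opprD addrACA subrr add0r.
  exact: diff_bd.
change (-3 <= seg (gc (sigma c) i) a b <= 3).
have := PS_seg (gc (sigma c) i) lt; rewrite /= => <-.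
have -> : PS (gc (sigma c) i) b.+1 - PS (gc (sigma c) i) a = st (c.2 (inord b.+1, i)) - st (c.2 (inord a, i)).
  by rewrite (colV V i hb) (colV V i ha) opprD addrACA subrr add0r.
exact: diff_bd.
Qed.

Definition Phi (c : Qconf N) :=
  (sigma c, [ffun i : 'I_N => c.1 (i, ord0)], [ffun j : 'I_N => c.2 (ord0, j)]).

Lemma Phi_inj : {in [set c | Qvalid c] &, injective Phi}.
Proof.
move=> c c'; rewrite !inE => V V' [es e1 e2].
have ord_inord (k : 'I_N.+1) : k = inord k by rewrite inord_val.
case: c c' V V' es e1 e2 => [c1 c2] [c1' c2'] V V' es e1 e2.
congr pair; apply/ffunP => -[x k]; apply: st_inj.
  rewrite (ord_inord k).
  have hk : (k <= N)%N by rewrite -ltnS.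
  rewrite (rowH V x hk) (rowH V' x hk) /= es; congr (st _ + _).
  have -> : (inord 0 : 'I_N.+1) = ord0 by apply: val_inj; rewrite /= inordK.
  by move/ffunP: e1 => /(_ x); rewrite !ffunE.
have hk : (x <= N)%N by rewrite -ltnS.
rewrite (ord_inord x) (colV V k hk) (colV V' k hk) /= es; congr (st _ + _).
have -> : (inord 0 : 'I_N.+1) = ord0 by apply: val_inj; rewrite /= inordK.
by move/ffunP: e2 => /(_ k); rewrite !ffunE.
Qed.
End Comb.

Lemma upper N : (ZQ N <= Zch N * 4 ^ N * 4 ^ N)%N.
Proof.
rewrite /ZQ -(card_in_imset (@Phi_inj N)).
apply: leq_trans (subset_leq_card (_ : _ \subset setX (setX [set s | charge3 s] setT) setT)) _.
  apply/subsetP => y /imsetP[c]; rewrite inE => V ->.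
  by rewrite !inE /= sigma_charge3.
by rewrite !cardsX !cardsT !card_ffun !card_ord.
Qed.

Lemma PS_S' N g (j : 'I_N) : PS g j.+1 = PS g j + g j.
Proof. by rewrite (PS_S g (ltn_ord j)); congr (_ + g _); exact: val_inj. Qed.

Lemma st_inord x : 0 <= x <= 3 -> st (inord (absz x) : 'I_4) = x.
Proof.
move=> /andP[h0 h3]; rewrite /st inordK; first by rewrite gez0_abs.
rewrite -ltz_nat gez0_abs //; lia.
Qed.

Section Lower.
Variable N : nat.
Variable s : {ffun 'I_N * 'I_N -> bool}.

Definition mr (i : 'I_N) : int :=
  PS (gr s i) (Order.arg_min ord0 xpredT (fun k : 'I_N.+1 => PS (gr s i) k)).
Definition mc (j : 'I_N) : int :=
  PS (gc s j) (Order.arg_min ord0 xpredT (fun k : 'I_N.+1 => PS (gc s j) k)).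

Hypothesis Hs : charge3 s.

Lemma mr_prop i k : (k <= N)%N -> 0 <= PS (gr s i) k - mr i <= 3.
Proof.
move=> hk; rewrite /mr.
case: (@arg_minP _ int _ ord0 xpredT (fun k => PS (gr s i) k) isT) => k0 _ Hm.
have := Hm (inord k) isT; rewrite /= inordK // => h.
rewrite subr_ge0 h /=.
apply: PS_bound => //; first by move=> a b ab; exact: (charge3P Hs).1.
by rewrite -ltnS.
Qed.

Lemma mc_prop j k : (k <= N)%N -> 0 <= PS (gc s j) k - mc j <= 3.
Proof.
move=> hk; rewrite /mc.
case: (@arg_minP _ int _ ord0 xpredT (fun k => PS (gc s j) k) isT) => k0 _ Hm.
have := Hm (inord k) isT; rewrite /= inordK // => h.
rewrite subr_ge0 h /=.
apply: PS_bound => //; first by move=> a b ab; exact: (charge3P Hs).2.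
by rewrite -ltnS.
Qed.

Definition cQ : Qconf N :=
  ([ffun p : 'I_N * 'I_N.+1 => inord (absz (PS (gr s p.1) p.2 - mr p.1))],
   [ffun p : 'I_N.+1 * 'I_N => inord (absz (PS (gc s p.2) p.1 - mc p.2))]).

Lemma cQ1 i (k : 'I_N.+1) : st (cQ.1 (i, k)) = PS (gr s i) k - mr i.
Proof. by rewrite ffunE /= st_inord // mr_prop // -ltnS. Qed.
Lemma cQ2 j (k : 'I_N.+1) : st (cQ.2 (k, j)) = PS (gc s j) k - mc j.
Proof. by rewrite ffunE /= st_inord // mc_prop // -ltnS. Qed.

Lemma cQ_row i j : st (cQ.1 (i, lift ord0 j)) - st (cQ.1 (i, widen_ord (leqnSn N) j)) = spin (s (i, j)).
Proof. by rewrite !cQ1 lift0 /= PS_S' opprB addrA subrK addrC addKr. Qed.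
Lemma cQ_col i j : st (cQ.2 (lift ord0 i, j)) - st (cQ.2 (widen_ord (leqnSn N) i, j)) = spin (s (i, j)).
Proof. by rewrite !cQ2 lift0 /= PS_S' opprB addrA subrK addrC addKr. Qed.

Lemma cQ_valid : Qvalid cQ.
Proof.
apply/forallP => i; apply/forallP => j /=.
rewrite cQ_row cQ_col eqxx /=; by case: (s (i, j)).
Qed.

Lemma cQ_sigma : sigma cQ = s.
Proof.
apply/ffunP => -[i j]; rewrite ffunE /= cQ_row; by case: (s (i, j)).
Qed.
End Lower.

Lemma lower N : (Zch N <= ZQ N)%N.
Proof.
rewrite /Zch /ZQ; apply: leq_trans (leq_imset_card (@sigma N) _).
apply: subset_leq_card; apply/subsetP => s; rewrite inE => Hs.
apply/imsetP; exists (cQ s); last by rewrite cQ_sigma.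
by rewrite inE cQ_valid.
Qed.

Close Scope ring_scope.
Open Scope R_scope.

Lemma Rpower16_ge1 x : 0 <= x -> 1 <= Rpower 16 x.
Proof.
move=> hx; rewrite -(Rpower_O 16); last lra.
apply: Rle_Rpower => //; lra.
Qed.

Lemma expn_pow m n : (m ^ n)%N = Nat.pow m n.
Proof. by elim: n => //= n IH; rewrite expnS IH. Qed.

Lemma key N : (1 <= N)%N ->
  rootN2 Zch N <= rootN2 ZQ N <= Rpower 16 (/ INR N) * rootN2 Zch N.
Proof.
move=> hN.
have hN' : 0 < INR N by apply: lt_0_INR; lia.
have he : 0 <= / INR (N * N).
  by apply: Rlt_le; apply: Rinv_0_lt_compat; rewrite mult_INR; apply: Rmult_lt_0_compat.
have hl := lower N; have hu := upper N.
rewrite /rootN2.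
have h16 := Rpower16_ge1 (Rlt_le _ _ (Rinv_0_lt_compat _ hN')).
case hz : (Zch N) => [|z].
  rewrite hz !mul0n leqn0 in hu; rewrite (eqP hu).
  split; first exact: Rle_refl.
  have := exp_pos (/ INR (N * N) * ln (INR 0)); rewrite -/(Rpower _ _) => hp.
  rewrite -{1}(Rmult_1_l (Rpower (INR 0) _)); apply: Rmult_le_compat_r => //; lra.
have hz0 : 0 < INR z.+1 by apply: lt_0_INR; lia.
split.
  apply: Rle_Rpower_l => //; split => //; apply: le_INR; move: hl; rewrite hz; lia.
have hQ : INR z.+1 <= INR (ZQ N) by apply: le_INR; move: hl; rewrite hz; lia.
apply: Rle_trans (Rle_Rpower_l _ (INR (Zch N * 4 ^ N * 4 ^ N)) _ he _) _.
  split; [lra|apply: le_INR; move: hu; lia].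
rewrite !mult_INR !expn_pow !pow_INR -hz.
rewrite (Rmult_comm (Rpower 16 _)) Rmult_assoc -Rpow_mult_distr.
have -> : INR 4 * INR 4 = 16 by rewrite /= ; lra.
rewrite -Rpower_mult_distr; last by apply: pow_lt; lra.
  2: by rewrite -hz in hz0.
apply: Rmult_le_compat_l; first by apply: Rlt_le; apply: exp_pos.
rewrite -Rpower_pow; last lra.
rewrite Rpower_mult.
have -> : INR N * / (INR N * INR N) = / INR N by field; lra.
exact: Rle_refl.
Qed.

Theorem mainTheorem1 (kappa_ch kappa_Q : R) :
  is_lim_seq (rootN2 Zch) kappa_ch ->
  is_lim_seq (rootN2 ZQ) kappa_Q ->
  kappa_ch = kappa_Q.
Proof.
move=> /is_lim_seq_incr_1 Hc /is_lim_seq_incr_1 HQ.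
have K n := key (ltn0Sn n).
apply: Rle_antisym.
  have := is_lim_seq_le _ _ _ _ (fun n => proj1 (K n)) Hc HQ; by [].
have hinv : is_lim_seq (fun n => / INR n.+1) 0.
  have h := is_lim_seq_inv (fun n => INR n.+1) p_infty (proj1 (is_lim_seq_incr_1 INR p_infty) is_lim_seq_INR) ltac:(discriminate).
  exact: h.
have hc : continuity_pt (fun x => Rpower 16 x) 0.
  rewrite /Rpower.
  apply: (continuity_pt_comp (fun x => x * ln 16) exp).
    apply: continuity_pt_mult; [apply: continuity_pt_id | apply: continuity_pt_const => ? ?; by []].
  apply: derivable_continuous_pt; apply: derivable_pt_exp.
have hp := is_lim_seq_continuous _ _ _ hc hinv.
rewrite Rpower_O in hp; last lra.
have hm := is_lim_seq_mult' _ _ _ _ hp Hc.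
rewrite Rmult_1_l in hm.
have := is_lim_seq_le _ _ _ _ (fun n => proj2 (K n)) HQ hm; by [].
Qed.
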